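(* The map $\langle\cdot,\cdot\rangle\mapsto(\langle e_p,e_p\rangle)_{p\in\mathbb{Z}}$ defines a bijection of cones from $\mathcal{C}$ to $\mathcal{T}$, carrying $\mathcal{C}^+$ onto $\mathcal{T}^+$.
   Context: $\mathcal{S}$ is the space of rapidly decreasing complex sequences indexed by $\mathbb{Z}$, and $\mathcal{S}^*$ its dual (sequences of polynomial growth, paired by $\sum b^pc_p$); $e_p\in\mathcal{S}^*$ is the sequence with $1$ in place $p$ and $0$ elsewhere. Via the Fourier isomorphism $\mathcal{S}\cong L\mathbb{C}=C^\infty(S^1,\mathbb{C})$, rotation of the circle by $\lambda\in S^1$ and reversal of loops give operators on $\mathcal{S}^*$ with $R_\lambda e_p=\lambda^{-p}e_p$ and $\iota e_p=e_{-p}$. $\mathcal{C}$ is the cone of continuous positive semi-definite sesquilinear forms on $\mathcal{S}^*$ invariant under all $R_\lambda$ and under $\iota$; $\mathcal{C}^+\subseteq\mathcal{C}$ is the sub-cone of positive definite forms. $\mathcal{T}$ is the cone of non-negative rapidly decreasing sequences $(a_p)_{p\in\mathbb{Z}}$ with $a_p=a_{-p}$ for all $p$, and $\mathcal{T}^+$ the sub-cone of strictly positive such sequences. *)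

(* Defs.v *)
From Stdlib Require Import Reals ZArith.
From Coquelicot Require Import Coquelicot.
Open Scope R_scope.

Definition seqZ := Z -> C.

Definition wt (p : Z) : R := 1 + IZR (Z.abs p).

Definition rapid (c : seqZ) : Prop :=
  forall k : nat, exists M : R, forall p : Z, wt p ^ k * Cmod (c p) <= M.

(* S^* : sequences of polynomial growth *)
Definition polygrowth (b : seqZ) : Prop :=
  exists (N : nat) (M : R), forall p : Z, Cmod (b p) <= M * wt p ^ N.

Definition S_bounded (B : seqZ -> Prop) : Prop :=
  forall k : nat, exists M : R, forall c, B c ->
    forall p : Z, wt p ^ k * Cmod (c p) <= M.

(* sum over Z of a complex sequence (used only for absolutely summable ones) *)
Definition zsum (f : seqZ) : C :=
  (Series (fun n => Re (f (Z.of_nat n))) + Series (fun n => Re (f (- Z.of_nat n - 1)%Z)),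
   Series (fun n => Im (f (Z.of_nat n))) + Series (fun n => Im (f (- Z.of_nat n - 1)%Z))).

Definition dpair (b c : seqZ) : C := zsum (fun p => Cmult (b p) (c p)).

Definition e (p : Z) : seqZ := fun q => if Z.eqb q p then RtoC 1 else RtoC 0.

Definition Cpowz (l : C) (z : Z) : C :=
  if (0 <=? z)%Z then Cpow l (Z.to_nat z) else Cpow (Cinv l) (Z.to_nat (- z)).

Definition rot (l : C) (b : seqZ) : seqZ := fun p => Cmult (Cpowz l (- p)) (b p).
Definition rev (b : seqZ) : seqZ := fun p => b (- p)%Z.

Definition form := seqZ -> seqZ -> C.

Definition sesquilinear (beta : form) : Prop :=
  (forall b b' c, polygrowth b -> polygrowth b' -> polygrowth c ->
     beta (fun p => Cplus (b p) (b' p)) c = Cplus (beta b c) (beta b' c) /\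
     beta c (fun p => Cplus (b p) (b' p)) = Cplus (beta c b) (beta c b')) /\
  (forall (a : C) b c, polygrowth b -> polygrowth c ->
     beta (fun p => Cmult a (b p)) c = Cmult (Cconj a) (beta b c) /\
     beta c (fun p => Cmult a (b p)) = Cmult a (beta c b)).

(* continuity for the strong dual topology on S^*, whose 0-neighbourhoods
   are generated by the (directed family of) seminorms
   q_B(b) = sup_{c in B} |<b,c>|, B bounded in S: a sesquilinear form is
   (jointly) continuous iff |beta(b,b')| <= C q_B(b) q_B(b') for some B, C. *)
Definition strong_continuous (beta : form) : Prop :=
  exists (B : seqZ -> Prop) (K : R),
    S_bounded B /\ 0 <= K /\
    forall b b' (r r' : R), polygrowth b -> polygrowth b' ->
      (forall c, B c -> Cmod (dpair b c) <= r) ->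
      (forall c, B c -> Cmod (dpair b' c) <= r') ->
      Cmod (beta b b') <= K * r * r'.

Definition psd (beta : form) : Prop :=
  forall b, polygrowth b -> Im (beta b b) = 0 /\ 0 <= Re (beta b b).

Definition pd (beta : form) : Prop :=
  psd beta /\ forall b, polygrowth b -> beta b b = RtoC 0 -> forall p, b p = RtoC 0.

Definition invariant (beta : form) : Prop :=
  (forall l : C, Cmod l = 1 -> forall b c, polygrowth b -> polygrowth c ->
     beta (rot l b) (rot l c) = beta b c) /\
  (forall b c, polygrowth b -> polygrowth c -> beta (rev b) (rev c) = beta b c).

Definition coneC (beta : form) : Prop :=
  sesquilinear beta /\ strong_continuous beta /\ psd beta /\ invariant beta.
Definition coneCplus (beta : form) : Prop := coneC beta /\ pd beta.

Definition rapidR (a : Z -> R) : Prop :=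
  forall k : nat, exists M : R, forall p : Z, wt p ^ k * Rabs (a p) <= M.
Definition coneT (a : Z -> R) : Prop :=
  rapidR a /\ (forall p, 0 <= a p) /\ (forall p, a p = a (- p)%Z).
Definition coneTplus (a : Z -> R) : Prop := coneT a /\ forall p, 0 < a p.

(* the map <.,.> |-> (<e_p,e_p>)_p ; on C these values are real (psd),
   so taking the real part loses nothing *)
Definition diagmap (beta : form) : Z -> R := fun p => Re (beta (e p) (e p)).

Definition form_add (b1 b2 : form) : form := fun x y => Cplus (b1 x y) (b2 x y).
Definition form_scal (t : R) (b : form) : form := fun x y => Cmult (RtoC t) (b x y).

(* Main.v *)
Require Import Defs.
From Stdlib Require Import Reals ZArith Lia Lra FunctionalExtensionality.
From Coquelicot Require Import Coquelicot.
Open Scope R_scope.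

Lemma wt_ge1 p : 1 <= wt p.
Proof. unfold wt. assert (0 <= IZR (Z.abs p)) by (apply IZR_le; lia). lra. Qed.
Lemma wt_pos p : 0 < wt p.
Proof. pose proof (wt_ge1 p). lra. Qed.
Lemma wt_pow_pos p k : 0 < wt p ^ k.
Proof. apply pow_lt, wt_pos. Qed.
Lemma wt_pow_ge1 p k : 1 <= wt p ^ k.
Proof. induction k; simpl. lra. pose proof (wt_ge1 p). nra. Qed.
Lemma wt_nat n : wt (Z.of_nat n) = INR n + 1.
Proof. unfold wt. rewrite Z.abs_eq by lia. rewrite INR_IZR_INZ. ring. Qed.
Lemma wt_neg n : wt (- Z.of_nat n - 1)%Z = INR n + 2.
Proof. unfold wt. rewrite Z.abs_neq by lia.
  replace (- (- Z.of_nat n - 1))%Z with (Z.of_nat n + 1)%Z by lia.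
  rewrite plus_IZR, <- INR_IZR_INZ. ring. Qed.

Definition invsq (n : nat) : R := / (INR n + 1) ^ 2.

Lemma tele_sum N : sum_f_R0 (fun n => / (INR n + 1) - / (INR n + 2)) N = 1 - / (INR N + 2).
Proof.
  induction N.
  - simpl. field.
  - rewrite tech5, IHN, S_INR. pose proof (pos_INR N). field. split; lra.
Qed.

Lemma ex_tele : ex_series (fun n => / (INR n + 1) - / (INR n + 2)).
Proof.
  exists 1. intros P HP.
  assert (L : is_lim_seq (fun N => 1 - / (INR N + 2)) 1).
  { assert (I0 : is_lim_seq (fun N => / (INR N + 2)) 0).
    { replace (Finite 0) with (Rbar_inv p_infty) by reflexivity.
      apply is_lim_seq_inv. apply (is_lim_seq_plus _ _ p_infty 2 p_infty). apply is_lim_seq_INR. apply is_lim_seq_const.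
      reflexivity. discriminate. }
    pose proof (is_lim_seq_minus' _ _ 1 0 (is_lim_seq_const 1) I0) as H. rewrite Rminus_0_r in H. exact H. }
  assert (L' : is_lim_seq (sum_n (fun n => / (INR n + 1) - / (INR n + 2))) 1).
  { eapply is_lim_seq_ext; [|exact L]. intros n. rewrite sum_n_Reals. rewrite tele_sum. reflexivity. }
  exact (L' P HP).
Qed.

Lemma ex_invsq : ex_series invsq.
Proof.
  apply (ex_series_le (K:=R_AbsRing) (V:=R_CompleteNormedModule) _ (fun n => 2 * (/ (INR n + 1) - / (INR n + 2)))).
  - intros n. unfold norm; simpl. unfold abs; simpl. unfold invsq. pose proof (pos_INR n).
    rewrite Rabs_pos_eq by (apply Rlt_le, Rinv_0_lt_compat; nra).
    replace (/ (INR n + 1) - / (INR n + 2)) with (/ ((INR n + 1) * (INR n + 2))) by (field; lra).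
    replace (2 * / ((INR n + 1) * (INR n + 2))) with (/ ((INR n + 1) * (INR n + 2) / 2)) by (field; lra).
    apply Rinv_le_contravar. nra. nra.
  - apply (ex_series_scal (K:=R_AbsRing) (V:=R_NormedModule) 2 _ ex_tele).
Qed.

Definition S2 : R := Series invsq.
Lemma invsq_pos n : 0 < invsq n.
Proof. unfold invsq. apply Rinv_0_lt_compat. pose proof (pos_INR n). nra. Qed.

Lemma Series_zero : Series (fun _ => 0) = 0.
Proof. transitivity (Series (fun n => 0 * invsq n)). apply Series_ext; intros; ring. rewrite Series_scal_l; ring. Qed.

Lemma S2_ge0 : 0 <= S2.
Proof. unfold S2. rewrite <- Series_zero.
  apply Series_le. intros n. pose proof (invsq_pos n). lra. apply ex_invsq. Qed.


Definition domR (u : Z -> R) (A : R) := forall p, Rabs (u p) <= A / wt p ^ 2.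
Definition zsumR (u : Z -> R) : R :=
  Series (fun n => u (Z.of_nat n)) + Series (fun n => u (- Z.of_nat n - 1)%Z).

Lemma domR_A u A : domR u A -> 0 <= A.
Proof. intros H. specialize (H 0%Z). pose proof (Rabs_pos (u 0%Z)).
  pose proof (wt_pow_pos 0 2). pose proof (wt_pos 0). assert (0 <= A / wt 0 ^ 2) by lra.
  replace A with (A / wt 0 ^ 2 * wt 0 ^ 2) by (field; lra). apply Rmult_le_pos; lra. Qed.

Lemma domR_pos u A n : domR u A -> Rabs (u (Z.of_nat n)) <= A * invsq n.
Proof. intros H. specialize (H (Z.of_nat n)). rewrite wt_nat in H. unfold invsq. exact H. Qed.

Lemma domR_neg u A n : domR u A -> Rabs (u (- Z.of_nat n - 1)%Z) <= A * invsq n.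
Proof. intros H. pose proof (domR_A _ _ H) as HA. specialize (H (- Z.of_nat n - 1)%Z). rewrite wt_neg in H.
  eapply Rle_trans; [exact H|]. unfold invsq, Rdiv. apply Rmult_le_compat_l; auto.
  pose proof (pos_INR n). apply Rinv_le_contravar; nra. Qed.

Lemma ex_dom (v : nat -> R) A : (forall n, Rabs (v n) <= A * invsq n) ->
  ex_series v /\ ex_series (fun n => Rabs (v n)) /\ Rabs (Series v) <= A * S2.
Proof.
  intros H.
  assert (E : ex_series (fun n => A * invsq n)).
  { apply (ex_series_scal (K:=R_AbsRing) (V:=R_NormedModule) A _ ex_invsq). }
  assert (E1 : ex_series (fun n => Rabs (v n))).
  { apply (ex_series_le (K:=R_AbsRing) (V:=R_CompleteNormedModule) _ (fun n => A * invsq n)); [|exact E].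
    intros n. unfold norm; simpl. unfold abs; simpl. rewrite Rabs_Rabsolu. auto. }
  split; [|split; auto].
  - apply ex_series_Rabs; auto.
  - eapply Rle_trans. apply Series_Rabs; auto. unfold S2. rewrite <- Series_scal_l.
    apply Series_le; auto. intros n. split; auto. apply Rabs_pos.
Qed.

Lemma zsumR_ex u A : domR u A ->
  ex_series (fun n => u (Z.of_nat n)) /\ ex_series (fun n => u (- Z.of_nat n - 1)%Z).
Proof. intros H. split.
  - apply (ex_dom _ A). intros; apply domR_pos; auto.
  - apply (ex_dom _ A). intros; apply domR_neg; auto. Qed.

Lemma zsumR_bound u A : domR u A -> Rabs (zsumR u) <= 2 * A * S2.
Proof. intros H. unfold zsumR.
  destruct (ex_dom (fun n => u (Z.of_nat n)) A) as [_ [_ H1]]. intros; apply domR_pos; auto.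
  destruct (ex_dom (fun n => u (- Z.of_nat n - 1)%Z) A) as [_ [_ H2]]. intros; apply domR_neg; auto.
  eapply Rle_trans. apply Rabs_triang. lra. Qed.

Lemma zsumR_ext u v : (forall p, u p = v p) -> zsumR u = zsumR v.
Proof. intros H. unfold zsumR. f_equal; apply Series_ext; intros; apply H. Qed.

Lemma zsumR_plus u v A B : domR u A -> domR v B ->
  zsumR (fun p => u p + v p) = zsumR u + zsumR v.
Proof. intros Hu Hv. destruct (zsumR_ex _ _ Hu). destruct (zsumR_ex _ _ Hv). unfold zsumR.
  rewrite !Series_plus; auto. ring. Qed.

Lemma zsumR_minus u v A B : domR u A -> domR v B ->
  zsumR (fun p => u p - v p) = zsumR u - zsumR v.
Proof. intros Hu Hv. destruct (zsumR_ex _ _ Hu). destruct (zsumR_ex _ _ Hv). unfold zsumR.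
  rewrite !Series_minus; auto. ring. Qed.

Lemma zsumR_scal c u : zsumR (fun p => c * u p) = c * zsumR u.
Proof. unfold zsumR. rewrite !Series_scal_l. ring. Qed.

Lemma Series_nonneg v : ex_series v -> (forall n, 0 <= v n) -> 0 <= Series v.
Proof. intros E H. rewrite <- Series_zero. apply Series_le; auto. intros n; split; [lra|auto]. Qed.

Lemma sum_ge_term v m : (forall n, 0 <= v n) -> v m <= sum_f_R0 v m.
Proof. intros H. destruct m. simpl; lra. rewrite tech5. pose proof (cond_pos_sum v m H). lra. Qed.

Lemma Series_ge_term v m : ex_series v -> (forall n, 0 <= v n) -> v m <= Series v.
Proof. intros E H. rewrite (Series_incr_n v (S m)) by (auto; lia). simpl pred.
  pose proof (sum_ge_term v m H).
  assert (0 <= Series (fun k => v (S m + k)%nat)).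
  { apply Series_nonneg; auto. apply (ex_series_incr_n (K:=R_AbsRing) (V:=R_NormedModule) v (S m)). auto. }
  lra. Qed.

Lemma zsumR_nonneg u A : domR u A -> (forall p, 0 <= u p) -> 0 <= zsumR u.
Proof. intros Hd H. destruct (zsumR_ex _ _ Hd). unfold zsumR.
  pose proof (Series_nonneg _ H0 (fun n => H _)). pose proof (Series_nonneg _ H1 (fun n => H _)). lra. Qed.

Lemma Z_cases (p : Z) : (exists n, p = Z.of_nat n) \/ (exists n, p = (- Z.of_nat n - 1)%Z).
Proof. destruct (Z_le_gt_dec 0 p).
  - left. exists (Z.to_nat p). lia.
  - right. exists (Z.to_nat (- p - 1)). lia. Qed.

Lemma zsumR_zero u A : domR u A -> (forall p, 0 <= u p) -> zsumR u = 0 -> forall p, u p = 0.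
Proof. intros Hd H Z0. destruct (zsumR_ex _ _ Hd) as [E1 E2]. unfold zsumR in Z0.
  pose proof (Series_nonneg _ E1 (fun n => H _)). pose proof (Series_nonneg _ E2 (fun n => H _)).
  intros p. destruct (Z_cases p) as [[n ->]|[n ->]].
  - pose proof (Series_ge_term _ n E1 (fun n => H _)). pose proof (H (Z.of_nat n)). simpl in *. lra.
  - pose proof (Series_ge_term _ n E2 (fun n => H _)). pose proof (H (- Z.of_nat n - 1)%Z). simpl in *. lra.
Qed.

Lemma sum_single v m : (forall n, n <> m -> v n = 0) ->
  forall N, sum_f_R0 v N = if (m <=? N)%nat then v m else 0.
Proof. intros H N. induction N.
  - simpl. destruct m. reflexivity. apply H. lia.
  - rewrite tech5, IHN. destruct (Nat.leb_spec m N); destruct (Nat.leb_spec m (S N)); try lia.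
    + rewrite (H (S N)) by lia. ring.
    + assert (m = S N) by lia. subst. ring.
    + rewrite (H (S N)) by lia. ring.
Qed.

Lemma Series_single v m : (forall n, n <> m -> v n = 0) -> Series v = v m.
Proof. intros H. apply is_series_unique.
  assert (L : is_lim_seq (sum_n v) (v m)).
  { apply is_lim_seq_ext_loc with (fun _ => v m). exists m. intros n Hn.
    rewrite sum_n_Reals, (sum_single v m H). destruct (Nat.leb_spec m n); try lia. auto.
    apply is_lim_seq_const. }
  exact L. Qed.

Lemma zsumR_single u p : (forall q, q <> p -> u q = 0) -> zsumR u = u p.
Proof. intros H. unfold zsumR. destruct (Z_cases p) as [[m ->]|[m ->]].
  - rewrite (Series_single _ m). rewrite (Series_single _ 0).
    rewrite (H (- Z.of_nat 0 - 1)%Z) by lia. ring.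
    intros; apply H; lia. intros n Hn; apply H; intro; apply Hn; lia.
  - rewrite (Series_single (fun n => u (Z.of_nat n)) 0). rewrite (Series_single _ m).
    rewrite (H (Z.of_nat 0)) by lia. ring.
    intros n Hn; apply H; intro; apply Hn; lia. intros n Hn; apply H; lia.
Qed.

Lemma wt_opp p : wt (- p) = wt p.
Proof. unfold wt. rewrite Z.abs_opp. auto. Qed.

Lemma zsumR_rev u A : domR u A -> zsumR (fun p => u (- p)%Z) = zsumR u.
Proof. intros Hd.
  assert (Hd' : domR (fun p => u (- p)%Z) A). { intros p. rewrite <- wt_opp. apply Hd. }
  destruct (zsumR_ex _ _ Hd) as [E1 E2]. destruct (zsumR_ex _ _ Hd') as [E3 E4].
  unfold zsumR. rewrite (Series_incr_1 _ E1), (Series_incr_1 _ E3).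
  replace (Series (fun k => u (- Z.of_nat (S k))%Z)) with (Series (fun n => u (- Z.of_nat n - 1)%Z)).
  replace (Series (fun n => u (- (- Z.of_nat n - 1))%Z)) with (Series (fun k => u (Z.of_nat (S k)))).
  simpl. ring.
  apply Series_ext; intros; f_equal; lia.
  apply Series_ext; intros; f_equal; lia.
Qed.

Fixpoint TR (u : Z -> R) (N : nat) : R :=
  match N with O => 0 | S n => TR u n + (u (Z.of_nat n) + u (- Z.of_nat n - 1)%Z) end.

Lemma TR_sum u N : TR u (S N) = sum_n (fun n => u (Z.of_nat n)) N + sum_n (fun n => u (- Z.of_nat n - 1)%Z) N.
Proof. rewrite !sum_n_Reals. induction N. simpl. ring. change (TR u (S (S N))) with (TR u (S N) + (u (Z.of_nat (S N)) + u (- Z.of_nat (S N) - 1)%Z)).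
  rewrite IHN, !tech5. ring. Qed.

Lemma TR_lim u A : domR u A -> is_lim_seq (fun N => TR u (S N)) (zsumR u).
Proof. intros Hd. destruct (zsumR_ex _ _ Hd) as [E1 E2].
  eapply is_lim_seq_ext. intros; symmetry; apply TR_sum.
  apply is_lim_seq_plus'.
  - pose proof (Series_correct _ E1) as H. exact H.
  - pose proof (Series_correct _ E2) as H. exact H.
Qed.

Lemma lim_squeeze (x y : R) (v : nat -> R) C : is_lim_seq v y ->
  (forall N, Rabs (x - v N) <= C * / (INR N + 1)) -> x = y.
Proof. intros L H.
  assert (L1 : is_lim_seq (fun N => Rabs (x - v N)) (Rabs (x - y))).
  { pose proof (is_lim_seq_abs _ (x - y) (is_lim_seq_minus' _ _ x y (is_lim_seq_const x) L)) as HH. exact HH. }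
  assert (L2 : is_lim_seq (fun N => C * / (INR N + 1)) 0).
  { replace (Finite 0) with (Rbar_mult C 0) by (simpl; f_equal; ring).
    apply is_lim_seq_scal_l. replace (Finite 0) with (Rbar_inv p_infty) by reflexivity.
    apply is_lim_seq_inv. apply (is_lim_seq_plus _ _ p_infty 1 p_infty). apply is_lim_seq_INR. apply is_lim_seq_const.
    reflexivity. discriminate. }
  pose proof (is_lim_seq_le _ _ _ _ H L1 L2) as Hle. simpl in Hle.
  pose proof (Rabs_pos (x - y)).
  assert (Rabs (x - y) = 0) by lra. apply Rabs_eq_0 in H1. lra.
Qed.


Ltac Csimpl := unfold Cplus, Cmult, Cconj, Cminus, Copp, RtoC, Re, Im in *; simpl in *.

Definition dom (f : seqZ) (A : R) := forall p, Cmod (f p) <= A / wt p ^ 2.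

Lemma zsum_eq f : zsum f = (zsumR (fun p => Re (f p)), zsumR (fun p => Im (f p))).
Proof. reflexivity. Qed.

Lemma im_le_Cmod c : Rabs (Im c) <= Cmod c.
Proof. destruct c as [a b]. unfold Cmod, Im; simpl.
  rewrite <- sqrt_Rsqr_abs. apply sqrt_le_1. apply Rle_0_sqr. nra. unfold Rsqr. nra. Qed.

Lemma Cmod_le_sum c : Cmod c <= Rabs (Re c) + Rabs (Im c).
Proof. apply Rsqr_incr_0_var. rewrite !Rsqr_pow2. rewrite Cmod2_alt.
  pose proof (Rabs_pos (Re c)). pose proof (Rabs_pos (Im c)).
  rewrite <- (pow2_abs (Re c)), <- (pow2_abs (Im c)). nra.
  pose proof (Rabs_pos (Re c)). pose proof (Rabs_pos (Im c)). lra. Qed.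

Lemma dom_re f A : dom f A -> domR (fun p => Re (f p)) A.
Proof. intros H p. eapply Rle_trans. apply re_le_Cmod. apply H. Qed.
Lemma dom_im f A : dom f A -> domR (fun p => Im (f p)) A.
Proof. intros H p. eapply Rle_trans. apply im_le_Cmod. apply H. Qed.

Lemma zsum_bound f A : dom f A -> Cmod (zsum f) <= 4 * A * S2.
Proof. intros H. eapply Rle_trans. apply Cmod_le_sum. rewrite zsum_eq. unfold Re, Im; simpl.
  pose proof (zsumR_bound _ _ (dom_re _ _ H)). pose proof (zsumR_bound _ _ (dom_im _ _ H)).
  unfold Re, Im in *. lra. Qed.

Lemma pair_eq (a b : C) : Re a = Re b -> Im a = Im b -> a = b.
Proof. destruct a, b; unfold Re, Im; simpl; intros; subst; auto. Qed.

Lemma zsum_ext f g : (forall p, f p = g p) -> zsum f = zsum g.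
Proof. intros H. rewrite !zsum_eq. f_equal; apply zsumR_ext; intros; rewrite H; auto. Qed.

Lemma zsum_plus f g A B : dom f A -> dom g B -> zsum (fun p => Cplus (f p) (g p)) = Cplus (zsum f) (zsum g).
Proof. intros Hf Hg. rewrite !zsum_eq. apply pair_eq; unfold Cplus, Re, Im; simpl.
  - apply (zsumR_plus (fun p => fst (f p)) (fun p => fst (g p)) A B (dom_re _ _ Hf) (dom_re _ _ Hg)).
  - apply (zsumR_plus (fun p => snd (f p)) (fun p => snd (g p)) A B (dom_im _ _ Hf) (dom_im _ _ Hg)).
Qed.

Lemma zsum_scal c f A : dom f A -> zsum (fun p => Cmult c (f p)) = Cmult c (zsum f).
Proof. intros Hf. rewrite !zsum_eq. pose proof (dom_re _ _ Hf) as H1. pose proof (dom_im _ _ Hf) as H2.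
  assert (H1' : domR (fun p => fst c * fst (f p)) (Rabs (fst c) * A)).
  { intros p. rewrite Rabs_mult. unfold Rdiv. rewrite Rmult_assoc. apply Rmult_le_compat_l. apply Rabs_pos. apply H1. }
  assert (H2' : domR (fun p => snd c * snd (f p)) (Rabs (snd c) * A)).
  { intros p. rewrite Rabs_mult. unfold Rdiv. rewrite Rmult_assoc. apply Rmult_le_compat_l. apply Rabs_pos. apply H2. }
  assert (H3' : domR (fun p => fst c * snd (f p)) (Rabs (fst c) * A)).
  { intros p. rewrite Rabs_mult. unfold Rdiv. rewrite Rmult_assoc. apply Rmult_le_compat_l. apply Rabs_pos. apply H2. }
  assert (H4' : domR (fun p => snd c * fst (f p)) (Rabs (snd c) * A)).
  { intros p. rewrite Rabs_mult. unfold Rdiv. rewrite Rmult_assoc. apply Rmult_le_compat_l. apply Rabs_pos. apply H1. }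
  apply pair_eq; unfold Cmult, Re, Im; simpl.
  - rewrite (zsumR_minus _ _ _ _ H1' H2'), !zsumR_scal. reflexivity.
  - rewrite (zsumR_plus _ _ _ _ H3' H4'), !zsumR_scal. ring.
Qed.

Lemma zsum_single f p : (forall q, q <> p -> f q = RtoC 0) -> zsum f = f p.
Proof. intros H. rewrite zsum_eq. apply pair_eq; unfold Re, Im; simpl.
  - apply (zsumR_single (fun p => fst (f p)) p). intros q Hq. rewrite H; auto.
  - apply (zsumR_single (fun p => snd (f p)) p). intros q Hq. rewrite H; auto.
Qed.

Lemma zsum_rev f A : dom f A -> zsum (fun p => f (- p)%Z) = zsum f.
Proof. intros H. rewrite !zsum_eq. apply pair_eq; unfold Re, Im; simpl.
  - apply (zsumR_rev (fun p => fst (f p)) A (dom_re _ _ H)).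
  - apply (zsumR_rev (fun p => snd (f p)) A (dom_im _ _ H)).
Qed.

Fixpoint TC (f : seqZ) (N : nat) : C :=
  match N with O => RtoC 0 | S n => Cplus (TC f n) (Cplus (f (Z.of_nat n)) (f (- Z.of_nat n - 1)%Z)) end.

Lemma TC_re f N : Re (TC f N) = TR (fun p => Re (f p)) N.
Proof. induction N; simpl. reflexivity. rewrite <- IHN. reflexivity. Qed.
Lemma TC_im f N : Im (TC f N) = TR (fun p => Im (f p)) N.
Proof. induction N; simpl. reflexivity. rewrite <- IHN. reflexivity. Qed.

Definition inr (N : nat) (p : Z) : bool := andb (Z.leb (- Z.of_nat N) p) (Z.ltb p (Z.of_nat N)).

Lemma inr_spec N p : inr N p = true <-> (- Z.of_nat N <= p < Z.of_nat N)%Z.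
Proof. unfold inr. split.
  - intros H. apply andb_prop in H as [H1 H2]. apply Z.leb_le in H1. apply Z.ltb_lt in H2. lia.
  - intros H. apply andb_true_intro; split; [apply Z.leb_le|apply Z.ltb_lt]; lia. Qed.

Lemma inr_false N p : inr N p = false <-> ~ (- Z.of_nat N <= p < Z.of_nat N)%Z.
Proof. rewrite <- inr_spec. destruct (inr N p); split; intros; try congruence; tauto. Qed.

Lemma TC_ext f g N : (forall p, inr N p = true -> f p = g p) -> TC f N = TC g N.
Proof. induction N; intros H; simpl. reflexivity.
  rewrite IHN. rewrite (H (Z.of_nat N)), (H (- Z.of_nat N - 1)%Z). reflexivity.
  apply inr_spec; lia. apply inr_spec; lia.
  intros p Hp. apply H. apply inr_spec. apply inr_spec in Hp. lia.
Qed.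

Lemma TC_single f p N : (forall q, q <> p -> f q = RtoC 0) ->
  TC f N = if inr N p then f p else RtoC 0.
Proof. intros H. induction N; cbn [TC].
  - replace (inr 0 p) with false. auto. symmetry. apply inr_false. simpl. lia.
  - rewrite IHN.
    destruct (Z.eq_dec p (Z.of_nat N)) as [->|n1].
    + rewrite (H (- Z.of_nat N - 1)%Z) by lia.
      replace (inr N (Z.of_nat N)) with false by (symmetry; apply inr_false; lia).
      replace (inr (S N) (Z.of_nat N)) with true by (symmetry; apply inr_spec; lia).
      apply pair_eq; Csimpl; ring.
    + destruct (Z.eq_dec p (- Z.of_nat N - 1)%Z) as [->|n2].
      * rewrite (H (Z.of_nat N)) by lia.
        replace (inr N (- Z.of_nat N - 1)%Z) with false by (symmetry; apply inr_false; lia).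
        replace (inr (S N) (- Z.of_nat N - 1)%Z) with true by (symmetry; apply inr_spec; lia).
        apply pair_eq; Csimpl; ring.
      * rewrite (H (Z.of_nat N)) by lia. rewrite (H (- Z.of_nat N - 1)%Z) by lia.
        replace (inr (S N) p) with (inr N p).
        destruct (inr N p); apply pair_eq; Csimpl; ring.
        destruct (inr N p) eqn:E.
        { symmetry. apply inr_spec. apply inr_spec in E. lia. }
        { symmetry. apply inr_false. apply inr_false in E. lia. }
Qed.


Definition pgb (x : seqZ) (N : nat) (A : R) := forall p, Cmod (x p) <= A * wt p ^ N.

Lemma pgb_A x N A : pgb x N A -> 0 <= A.
Proof. intros H. specialize (H 0%Z). pose proof (Cmod_ge_0 (x 0%Z)). pose proof (wt_pow_pos 0 N).
  destruct (Rle_or_lt 0 A); auto. nra. Qed.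

Lemma le_div_pow w k t M : 0 < w -> w ^ k * t <= M -> t <= M / w ^ k.
Proof. intros Hw H. pose proof (pow_lt w k Hw). apply Rmult_le_reg_l with (w ^ k); auto.
  replace (w ^ k * (M / w ^ k)) with M by (field; lra). auto. Qed.

Lemma pow_split w a b : 0 < w -> w ^ a * / w ^ (a + b) = / w ^ b.
Proof. intros Hw. rewrite pow_add. pose proof (pow_lt w a Hw). pose proof (pow_lt w b Hw). field. lra. Qed.

Lemma e_same p : e p p = RtoC 1.
Proof. unfold e. rewrite Z.eqb_refl. auto. Qed.
Lemma e_diff p q : q <> p -> e p q = RtoC 0.
Proof. intros H. unfold e. apply Z.eqb_neq in H. rewrite H. auto. Qed.

Lemma Cmod_e p q : Cmod (e p q) <= 1.
Proof. unfold e. destruct (q =? p)%Z. rewrite Cmod_1; lra. rewrite Cmod_0; lra. Qed.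

Lemma pg_le x z : polygrowth x -> (forall p, Cmod (z p) <= Cmod (x p)) -> polygrowth z.
Proof. intros [N [M H]] H2. exists N, M. intros p. eapply Rle_trans; eauto. Qed.

Lemma pg_scal_e a p : polygrowth (fun q => Cmult a (e p q)).
Proof. exists 0%nat, (Cmod a). intros q. rewrite Cmod_mult. simpl. rewrite Rmult_1_r.
  pose proof (Cmod_e p q). pose proof (Cmod_ge_0 a). pose proof (Cmod_ge_0 (e p q)). nra. Qed.

Lemma pg_e p : polygrowth (e p).
Proof. exists 0%nat, 1. intros q. simpl. rewrite Rmult_1_r. apply Cmod_e. Qed.

Lemma dpair_e p c : dpair (e p) c = c p.
Proof. unfold dpair. rewrite (zsum_single _ p). rewrite e_same. apply pair_eq; Csimpl; ring.
  intros q Hq. rewrite e_diff by auto. apply pair_eq; Csimpl; ring. Qed.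

Lemma dpair_se b a p : dpair b (fun q => Cmult a (e p q)) = Cmult (b p) a.
Proof. unfold dpair. rewrite (zsum_single _ p). rewrite e_same. apply pair_eq; Csimpl; ring.
  intros q Hq. rewrite e_diff by auto. apply pair_eq; Csimpl; ring. Qed.

Lemma dom_prod x y a Nx Ny Ax Ay : pgb x Nx Ax -> pgb y Ny Ay -> rapidR a ->
  exists M, dom (fun p => Cmult (Cmult (Cconj (x p)) (y p)) (RtoC (a p))) M.
Proof. intros Hx Hy Ha. destruct (Ha (Nx + Ny + 2)%nat) as [M HM].
  exists (Ax * Ay * M). intros p. rewrite !Cmod_mult, Cmod_conj, Cmod_R.
  pose proof (wt_pos p) as Hw.
  assert (H3 : Rabs (a p) <= M / wt p ^ (Nx + Ny + 2)) by (apply le_div_pow; auto).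
  pose proof (Hx p). pose proof (Hy p). pose proof (Cmod_ge_0 (x p)). pose proof (Cmod_ge_0 (y p)). pose proof (Rabs_pos (a p)).
  eapply Rle_trans. apply Rmult_le_compat. apply Rmult_le_pos; auto. auto.
  apply Rmult_le_compat; eauto. eauto.
  replace (Ax * wt p ^ Nx * (Ay * wt p ^ Ny) * (M / wt p ^ (Nx + Ny + 2)))
    with (Ax * Ay * M * (wt p ^ (Nx + Ny) * / wt p ^ (Nx + Ny + 2))).
  rewrite pow_split by auto. unfold Rdiv. lra.
  rewrite pow_add. unfold Rdiv. ring.
Qed.

Lemma dpair_bound B : S_bounded B -> forall m, exists M, forall z A,
  (forall p, Cmod (z p) <= A * wt p ^ m) -> forall c, B c -> Cmod (dpair z c) <= 4 * (A * M) * S2.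
Proof. intros HB m. destruct (HB (m + 2)%nat) as [M HM]. exists M. intros z A Hz c Hc.
  unfold dpair. apply zsum_bound. intros p. rewrite Cmod_mult.
  pose proof (wt_pos p) as Hw.
  assert (H3 : Cmod (c p) <= M / wt p ^ (m + 2)) by (apply le_div_pow; auto).
  pose proof (Cmod_ge_0 (z p)). pose proof (Cmod_ge_0 (c p)).
  eapply Rle_trans. apply Rmult_le_compat; eauto.
  replace (A * wt p ^ m * (M / wt p ^ (m + 2))) with (A * M * (wt p ^ m * / wt p ^ (m + 2))) by (unfold Rdiv; ring).
  rewrite pow_split by auto. unfold Rdiv. lra.
Qed.


Lemma part1 beta : coneC beta -> coneT (diagmap beta).
Proof.
  intros [Hs [[B [K [HB [HK Hc]]]] [Hpsd Hinv]]]. split; [|split].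
  - intros k. destruct (HB k) as [M HM]. exists (K * M * M). intros p.
    pose proof (wt_pos p) as Hw. pose proof (wt_pow_ge1 p k) as Hk.
    assert (H1 : Cmod (beta (e p) (e p)) <= K * (M / wt p ^ k) * (M / wt p ^ k)).
    { apply Hc; try apply pg_e; intros c Hcc; rewrite dpair_e; apply le_div_pow; auto. }
    unfold diagmap. pose proof (re_le_Cmod (beta (e p) (e p))).
    assert (HM0 : 0 <= M * M) by nra.
    apply Rle_trans with (wt p ^ k * (K * (M / wt p ^ k) * (M / wt p ^ k))).
    apply Rmult_le_compat_l; lra.
    replace (wt p ^ k * (K * (M / wt p ^ k) * (M / wt p ^ k))) with ((K * M * M) * / wt p ^ k) by (field; lra).
    assert (0 <= K * M * M) by (rewrite Rmult_assoc; apply Rmult_le_pos; auto).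
    assert (/ wt p ^ k <= 1). { rewrite <- Rinv_1. apply Rinv_le_contravar; lra. }
    assert (0 < / wt p ^ k) by (apply Rinv_0_lt_compat; lra). nra.
  - intros p. apply (Hpsd (e p) (pg_e p)).
  - intros p. unfold diagmap.
    assert (E : rev (e p) = e (- p)%Z).
    { apply functional_extensionality. intros q. unfold rev, e.
      destruct (Z.eqb_spec (- q) p), (Z.eqb_spec q (- p)); auto; lia. }
    rewrite <- E. rewrite (proj2 Hinv); auto; apply pg_e.
Qed.

Definition cis (s : R) : C := (cos s, sin s).

Lemma Cpow_cis s n : Cpow (cis s) n = cis (INR n * s).
Proof. induction n. simpl. unfold cis. rewrite Rmult_0_l, cos_0, sin_0. auto.
  cbn [Cpow]. rewrite IHn, S_INR. unfold cis. replace ((INR n + 1) * s) with (s + INR n * s) by ring.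
  rewrite cos_plus, sin_plus. apply pair_eq; Csimpl; ring. Qed.

Lemma Cinv_cis s : Cinv (cis s) = cis (- s).
Proof. unfold cis, Cinv. simpl. rewrite cos_neg, sin_neg. pose proof (sin2_cos2 s). unfold Rsqr in H.
  replace (cos s * (cos s * 1) + sin s * (sin s * 1)) with 1 by lra. f_equal; field. Qed.

Lemma Cpowz_cis s z : Cpowz (cis s) z = cis (IZR z * s).
Proof. unfold Cpowz. destruct (Z.leb_spec 0 z).
  - rewrite Cpow_cis. rewrite INR_IZR_INZ, Z2Nat.id by lia. auto.
  - rewrite Cinv_cis, Cpow_cis. rewrite INR_IZR_INZ, Z2Nat.id by lia. rewrite opp_IZR. f_equal; ring.
Qed.

Lemma Cmod_cis s : Cmod (cis s) = 1.
Proof. unfold Cmod, cis; simpl. pose proof (sin2_cos2 s). unfold Rsqr in H. replace (cos s * (cos s * 1) + sin s * (sin s * 1)) with 1 by lra. apply sqrt_1. Qed.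

Lemma conj_cis a b : Cmult (Cconj (cis a)) (cis b) = cis (b - a).
Proof. unfold cis. rewrite cos_minus, sin_minus. apply pair_eq; Csimpl; ring. Qed.

Lemma rot_e l p : rot l (e p) = (fun r => Cmult (Cpowz l (- p)) (e p r)).
Proof. apply functional_extensionality. intros r. unfold rot. destruct (Z.eq_dec r p) as [->|n]. auto.
  rewrite e_diff by auto. apply pair_eq; Csimpl; ring. Qed.

Lemma ortho beta p q : coneC beta -> p <> q -> beta (e p) (e q) = RtoC 0.
Proof.
  intros [[Hadd Hsc] [_ [_ [Hrot _]]]] Hpq.
  set (t := PI / IZR (p - q)).
  assert (Hl : Cmod (cis t) = 1) by apply Cmod_cis.
  pose proof (Hrot (cis t) Hl (e p) (e q) (pg_e p) (pg_e q)) as H.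
  rewrite !rot_e in H.
  rewrite (proj1 (Hsc _ _ _ (pg_e p) (pg_scal_e _ q))) in H.
  rewrite (proj2 (Hsc _ _ _ (pg_e q) (pg_e p))) in H.
  rewrite !Cpowz_cis in H.
  replace (Cmult (Cconj (cis (IZR (- p) * t))) (Cmult (cis (IZR (- q) * t)) (beta (e p) (e q))))
    with (Cmult (Cmult (Cconj (cis (IZR (- p) * t))) (cis (IZR (- q) * t))) (beta (e p) (e q))) in H by ring.
  rewrite conj_cis in H.
  replace (IZR (- q) * t - IZR (- p) * t) with PI in H.
  2:{ unfold t. rewrite !opp_IZR, minus_IZR. assert (IZR p - IZR q <> 0).
      { rewrite <- minus_IZR. apply not_0_IZR. lia. } field. auto. }
  unfold cis in H. rewrite cos_PI, sin_PI in H.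
  destruct (beta (e p) (e q)) as [u v]. unfold Cmult in H. simpl in H. injection H. intros. apply pair_eq; simpl; lra.
Qed.


Fixpoint trunc (x : seqZ) (N : nat) : seqZ :=
  match N with
  | O => fun _ => RtoC 0
  | S n => fun p => Cplus (trunc x n p)
             (Cplus (Cmult (x (Z.of_nat n)) (e (Z.of_nat n) p)) (Cmult (x (- Z.of_nat n - 1)%Z) (e (- Z.of_nat n - 1)%Z p)))
  end.

Lemma trunc_TC x N p : trunc x N p = TC (fun q => Cmult (x q) (e q p)) N.
Proof. induction N; simpl; auto. rewrite IHN; auto. Qed.

Lemma trunc_val x N p : trunc x N p = if inr N p then x p else RtoC 0.
Proof. rewrite trunc_TC. rewrite (TC_single _ p). rewrite e_same.
  destruct (inr N p); auto. apply pair_eq; Csimpl; ring.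
  intros q Hq. rewrite e_diff by auto. apply pair_eq; Csimpl; ring. Qed.

Lemma Cmod_trunc x N p : Cmod (trunc x N p) <= Cmod (x p).
Proof. rewrite trunc_val. destruct (inr N p). lra. rewrite Cmod_0. apply Cmod_ge_0. Qed.

Lemma pg_bdd z M : (forall p, Cmod (z p) <= M) -> polygrowth z.
Proof. intros H. exists 0%nat, M. intros p. simpl. rewrite Rmult_1_r. auto. Qed.

Lemma pg_two a b p q : polygrowth (fun r => Cplus (Cmult a (e p r)) (Cmult b (e q r))).
Proof. apply pg_bdd with (Cmod a + Cmod b). intros r. eapply Rle_trans. apply Cmod_triangle.
  rewrite !Cmod_mult. pose proof (Cmod_e p r). pose proof (Cmod_e q r).
  pose proof (Cmod_ge_0 a). pose proof (Cmod_ge_0 b). pose proof (Cmod_ge_0 (e p r)). pose proof (Cmod_ge_0 (e q r)). nra. Qed.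

Lemma pg_trunc x N : polygrowth x -> polygrowth (trunc x N).
Proof. intros H. apply (pg_le x); auto. intros; apply Cmod_trunc. Qed.


Lemma beta_zero_l (beta : form) (Hb : coneC beta) z : polygrowth z -> beta (fun _ => RtoC 0) z = RtoC 0.
Proof. intros Hz. destruct Hb as [[_ Hsc] _].
  replace (fun _ : Z => RtoC 0) with (fun p => Cmult (RtoC 0) (e 0%Z p)).
  rewrite (proj1 (Hsc _ _ _ (pg_e 0) Hz)). apply pair_eq; Csimpl; ring.
  apply functional_extensionality; intros; apply pair_eq; Csimpl; ring. Qed.

Lemma beta_zero_r (beta : form) (Hb : coneC beta) z : polygrowth z -> beta z (fun _ => RtoC 0) = RtoC 0.
Proof. intros Hz. destruct Hb as [[_ Hsc] _].
  replace (fun _ : Z => RtoC 0) with (fun p => Cmult (RtoC 0) (e 0%Z p)).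
  rewrite (proj2 (Hsc _ _ _ (pg_e 0) Hz)). apply pair_eq; Csimpl; ring.
  apply functional_extensionality; intros; apply pair_eq; Csimpl; ring. Qed.

Lemma L1 (beta : form) (Hb : coneC beta) x z N : polygrowth x -> polygrowth z ->
  beta (trunc x N) z = TC (fun p => Cmult (Cconj (x p)) (beta (e p) z)) N.
Proof. intros Hx Hz. pose proof Hb as [[Hadd Hsc] _]. induction N.
  - simpl. apply (beta_zero_l beta Hb); auto.
  - set (a := x (Z.of_nat N)). set (b := x (- Z.of_nat N - 1)%Z).
    change (trunc x (S N)) with (fun p => Cplus (trunc x N p)
      (Cplus (Cmult a (e (Z.of_nat N) p)) (Cmult b (e (- Z.of_nat N - 1)%Z p)))).
    rewrite (proj1 (Hadd _ _ _ (pg_trunc x N Hx) (pg_two _ _ _ _) Hz)).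
    rewrite (proj1 (Hadd _ _ _ (pg_scal_e _ _) (pg_scal_e _ _) Hz)).
    rewrite (proj1 (Hsc _ _ _ (pg_e _) Hz)). rewrite (proj1 (Hsc _ _ _ (pg_e _) Hz)).
    rewrite IHN. reflexivity.
Qed.

Lemma L2 (beta : form) (Hb : coneC beta) w y N : polygrowth w -> polygrowth y ->
  beta w (trunc y N) = TC (fun q => Cmult (y q) (beta w (e q))) N.
Proof. intros Hw Hy. pose proof Hb as [[Hadd Hsc] _]. induction N.
  - simpl. apply (beta_zero_r beta Hb); auto.
  - set (a := y (Z.of_nat N)). set (b := y (- Z.of_nat N - 1)%Z).
    change (trunc y (S N)) with (fun p => Cplus (trunc y N p)
      (Cplus (Cmult a (e (Z.of_nat N) p)) (Cmult b (e (- Z.of_nat N - 1)%Z p)))).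
    rewrite (proj2 (Hadd _ _ _ (pg_trunc y N Hy) (pg_two _ _ _ _) Hw)).
    rewrite (proj2 (Hadd _ _ _ (pg_scal_e _ _) (pg_scal_e _ _) Hw)).
    rewrite (proj2 (Hsc _ _ _ (pg_e _) Hw)). rewrite (proj2 (Hsc _ _ _ (pg_e _) Hw)).
    rewrite IHN. reflexivity.
Qed.

Lemma diag_eq (beta : form) (Hb : coneC beta) p : beta (e p) (e p) = RtoC (diagmap beta p).
Proof. destruct Hb as [_ [_ [Hpsd _]]]. destruct (Hpsd (e p) (pg_e p)) as [H1 _].
  apply pair_eq; auto. Qed.

Definition integrand (beta : form) (x y : seqZ) : seqZ :=
  fun p => Cmult (Cmult (Cconj (x p)) (y p)) (RtoC (diagmap beta p)).

Lemma trunc_trunc (beta : form) (Hb : coneC beta) x y N : polygrowth x -> polygrowth y ->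
  beta (trunc x N) (trunc y N) = TC (integrand beta x y) N.
Proof. intros Hx Hy. rewrite (L1 beta Hb); auto using pg_trunc. apply TC_ext. intros p Hp.
  rewrite (L2 beta Hb); auto using pg_e. rewrite (TC_single _ p). rewrite Hp. unfold integrand. rewrite (diag_eq beta Hb).
  apply pair_eq; Csimpl; ring.
  intros q Hq. rewrite ortho; auto. apply pair_eq; Csimpl; ring. Qed.



Definition tail (x : seqZ) N : seqZ := fun p => Cminus (x p) (trunc x N p).

Lemma tail_val x N p : tail x N p = if inr N p then RtoC 0 else x p.
Proof. unfold tail. rewrite trunc_val. destruct (inr N p); apply pair_eq; Csimpl; ring. Qed.

Lemma split_x x N : x = fun p => Cplus (trunc x N p) (tail x N p).
Proof. apply functional_extensionality; intros p. unfold tail. apply pair_eq; Csimpl; ring. Qed.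

Lemma pg_tail x N : polygrowth x -> polygrowth (tail x N).
Proof. intros H. apply (pg_le x); auto. intros p. rewrite tail_val. destruct (inr N p). rewrite Cmod_0; apply Cmod_ge_0. lra. Qed.

Lemma pgb_trunc x m A N : pgb x m A -> forall p, Cmod (trunc x N p) <= A * wt p ^ m.
Proof. intros H p. eapply Rle_trans. apply Cmod_trunc. apply H. Qed.

Lemma pgb_tail x m A N : pgb x m A -> forall p, Cmod (tail x N p) <= (A / (INR N + 1)) * wt p ^ (m + 1).
Proof. intros H p. pose proof (pgb_A _ _ _ H) as HA. pose proof (pos_INR N).
  pose proof (wt_pos p). pose proof (wt_pow_pos p m).
  assert (0 <= A / (INR N + 1) * wt p ^ (m + 1)).
  { apply Rmult_le_pos. apply Rmult_le_pos; auto. apply Rlt_le, Rinv_0_lt_compat; lra. apply Rlt_le, wt_pow_pos. }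
  rewrite tail_val. destruct (inr N p) eqn:E. rewrite Cmod_0; auto.
  apply inr_false in E.
  assert (Hw : INR N + 1 <= wt p).
  { unfold wt. rewrite INR_IZR_INZ. assert (Z.of_nat N <= Z.abs p)%Z by lia. apply IZR_le in H4. lra. }
  eapply Rle_trans. apply H. rewrite pow_add. simpl pow. rewrite Rmult_1_r.
  replace (A / (INR N + 1) * (wt p ^ m * wt p)) with ((A * wt p ^ m) * (wt p / (INR N + 1))) by (field; lra).
  rewrite <- (Rmult_1_r (A * wt p ^ m)) at 1. apply Rmult_le_compat_l. apply Rmult_le_pos; lra.
  apply Rmult_le_reg_r with (INR N + 1). lra. unfold Rdiv. rewrite Rmult_assoc, Rinv_l by lra. lra.
Qed.

Lemma re_minus_le a b : Rabs (Re a - Re b) <= Cmod (Cminus a b).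
Proof. replace (Re a - Re b) with (Re (Cminus a b)) by (Csimpl; ring). apply re_le_Cmod. Qed.
Lemma im_minus_le a b : Rabs (Im a - Im b) <= Cmod (Cminus a b).
Proof. replace (Im a - Im b) with (Im (Cminus a b)) by (Csimpl; ring). apply im_le_Cmod. Qed.

Lemma aux_inv C N : C * / (INR (S N) + 1) <= Rabs C * / (INR N + 1).
Proof. pose proof (pos_INR N). rewrite S_INR. apply Rle_trans with (Rabs C * / (INR N + 1 + 1)).
  apply Rmult_le_compat_r. apply Rlt_le, Rinv_0_lt_compat; lra. apply Rle_abs.
  apply Rmult_le_compat_l. apply Rabs_pos. apply Rinv_le_contravar; lra. Qed.

Lemma rep beta x y : coneC beta -> polygrowth x -> polygrowth y ->
  beta x y = zsum (integrand beta x y).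
Proof.
  intros Hb Hx0 Hy0. pose proof Hb as [[Hadd Hsc] [[B [K [HB [HK Hc]]]] _]].
  pose proof Hx0 as [Nx [Ax Hx]]. pose proof Hy0 as [Ny [Ay Hy]].
  fold (pgb x Nx Ax) in Hx. fold (pgb y Ny Ay) in Hy.
  destruct (dpair_bound B HB Nx) as [Mx2 HMx2]. destruct (dpair_bound B HB (Nx + 1)) as [Mx3 HMx3].
  destruct (dpair_bound B HB Ny) as [My2 HMy2]. destruct (dpair_bound B HB (Ny + 1)) as [My3 HMy3].
  destruct (dom_prod x y (diagmap beta) Nx Ny Ax Ay Hx Hy (proj1 (part1 beta Hb))) as [Mf Hf].
  set (Cst := K * (4 * (Ax * Mx3) * S2) * (4 * (Ay * My2) * S2) + K * (4 * (Ax * Mx2) * S2) * (4 * (Ay * My3) * S2)).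
  assert (Bd : forall N, Cmod (Cminus (beta x y) (TC (integrand beta x y) N)) <= Cst * / (INR N + 1)).
  { intros N.
    assert (E1 : beta x y = Cplus (beta (trunc x N) y) (beta (tail x N) y)).
    { transitivity (beta (fun p => Cplus (trunc x N p) (tail x N p)) y).
      f_equal. apply split_x. apply Hadd; auto using pg_trunc, pg_tail. }
    assert (E2 : beta (trunc x N) y = Cplus (beta (trunc x N) (trunc y N)) (beta (trunc x N) (tail y N))).
    { transitivity (beta (trunc x N) (fun p => Cplus (trunc y N p) (tail y N p))).
      f_equal. apply split_x. apply Hadd; auto using pg_trunc, pg_tail. }
    rewrite E1, E2, (trunc_trunc beta Hb) by auto.
    replace (Cminus (Cplus (Cplus (TC (integrand beta x y) N) (beta (trunc x N) (tail y N))) (beta (tail x N) y))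
       (TC (integrand beta x y) N)) with (Cplus (beta (tail x N) y) (beta (trunc x N) (tail y N))) by ring.
    eapply Rle_trans. apply Cmod_triangle.
    pose proof (Hc (tail x N) y _ _ (pg_tail x N Hx0) Hy0
       (HMx3 (tail x N) _ (pgb_tail x Nx Ax N Hx)) (HMy2 y _ Hy)) as H1.
    pose proof (Hc (trunc x N) (tail y N) _ _ (pg_trunc x N Hx0) (pg_tail y N Hy0)
       (HMx2 (trunc x N) _ (pgb_trunc x Nx Ax N Hx)) (HMy3 (tail y N) _ (pgb_tail y Ny Ay N Hy))) as H2.
    pose proof (pos_INR N).
    replace (Cst * / (INR N + 1)) with
      (K * (4 * (Ax / (INR N + 1) * Mx3) * S2) * (4 * (Ay * My2) * S2) +
       K * (4 * (Ax * Mx2) * S2) * (4 * (Ay / (INR N + 1) * My3) * S2)) by (unfold Cst; field; lra).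
    lra. }
  assert (Hre : Re (beta x y) = zsumR (fun p => Re (integrand beta x y p))).
  { apply (lim_squeeze _ _ _ (Rabs Cst) (TR_lim _ _ (dom_re _ _ Hf))).
    intros N. rewrite <- TC_re. eapply Rle_trans. apply re_minus_le. eapply Rle_trans. apply Bd. apply aux_inv. }
  assert (Him : Im (beta x y) = zsumR (fun p => Im (integrand beta x y p))).
  { apply (lim_squeeze _ _ _ (Rabs Cst) (TR_lim _ _ (dom_im _ _ Hf))).
    intros N. rewrite <- TC_im. eapply Rle_trans. apply im_minus_le. eapply Rle_trans. apply Bd. apply aux_inv. }
  rewrite zsum_eq. apply pair_eq; auto.
Qed.


Definition intg (a : Z -> R) (x y : seqZ) : seqZ :=
  fun p => Cmult (Cmult (Cconj (x p)) (y p)) (RtoC (a p)).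

Definition betaA (a : Z -> R) : form := fun x y => zsum (intg a x y).

Lemma dom_of a x y : rapidR a -> polygrowth x -> polygrowth y -> exists M, dom (intg a x y) M.
Proof. intros Ha [Nx [Ax Hx]] [Ny [Ay Hy]]. apply (dom_prod x y a Nx Ny Ax Ay Hx Hy Ha). Qed.

Lemma Cmod_Cpowz l z : Cmod l = 1 -> Cmod (Cpowz l z) = 1.
Proof. intros H. unfold Cpowz. destruct (0 <=? z)%Z.
  - rewrite Cmod_pow, H. apply pow1.
  - rewrite Cmod_pow, Cmod_inv, H, Rinv_1. apply pow1.
    intro H0. rewrite H0, Cmod_0 in H. lra. Qed.

Lemma conj_unit u : Cmod u = 1 -> Cmult (Cconj u) u = RtoC 1.
Proof. intros H. pose proof (Cmod2_conj u) as H2. rewrite H in H2.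
  rewrite Cmult_comm, <- H2. apply pair_eq; simpl; ring. Qed.

Lemma zsumR_zero_fun : zsumR (fun _ => 0) = 0.
Proof. unfold zsumR. rewrite !Series_zero. ring. Qed.

Lemma surj a : coneT a -> coneC (betaA a) /\ forall p, diagmap (betaA a) p = a p.
Proof.
  intros [Ha [Hpos Hsym]]. split; [split; [|split; [|split]]|].
  - split.
    + intros b b' c Hb Hb' Hc.
      destruct (dom_of a b c Ha Hb Hc) as [M1 D1]. destruct (dom_of a b' c Ha Hb' Hc) as [M2 D2].
      destruct (dom_of a c b Ha Hc Hb) as [M3 D3]. destruct (dom_of a c b' Ha Hc Hb') as [M4 D4].
      split; unfold betaA.
      * rewrite <- (zsum_plus _ _ _ _ D1 D2). apply zsum_ext. intros p. unfold intg. apply pair_eq; Csimpl; ring.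
      * rewrite <- (zsum_plus _ _ _ _ D3 D4). apply zsum_ext. intros p. unfold intg. apply pair_eq; Csimpl; ring.
    + intros a0 b c Hb Hc.
      destruct (dom_of a b c Ha Hb Hc) as [M1 D1]. destruct (dom_of a c b Ha Hc Hb) as [M3 D3].
      split; unfold betaA.
      * rewrite <- (zsum_scal _ _ _ D1). apply zsum_ext. intros p. unfold intg. apply pair_eq; Csimpl; ring.
      * rewrite <- (zsum_scal _ _ _ D3). apply zsum_ext. intros p. unfold intg. apply pair_eq; Csimpl; ring.
  -
    set (w := fun q => sqrt (a q) * wt q).
    exists (fun c => exists q, c = (fun p => Cmult (RtoC (w q)) (e q p))), (4 * S2).
    split; [|split].
    + intros k. destruct (Ha (2 * k + 2)%nat) as [Ma HMa]. exists (sqrt Ma).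
      intros c [q ->] p. rewrite Cmod_mult, Cmod_R.
      destruct (Z.eq_dec p q) as [->|n].
      * rewrite e_same, Cmod_1, Rmult_1_r. unfold w.
        pose proof (Hpos q). pose proof (wt_pos q).
        rewrite Rabs_pos_eq by (apply Rmult_le_pos; [apply sqrt_pos|lra]).
        replace (wt q ^ k * (sqrt (a q) * wt q)) with (sqrt (wt q ^ (2 * k + 2) * a q)).
        apply sqrt_le_1_alt. specialize (HMa q). rewrite Rabs_pos_eq in HMa by auto. auto.
        rewrite sqrt_mult. replace (wt q ^ (2 * k + 2)) with ((wt q ^ (k + 1)) ^ 2).
        rewrite sqrt_pow2. rewrite pow_add, pow_1. rewrite Rmult_assoc, (Rmult_comm (wt q)). reflexivity.
        apply Rlt_le, pow_lt; lra.
        rewrite <- pow_mult. f_equal. lia.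
        apply Rlt_le, pow_lt; lra. auto.
      * rewrite e_diff by auto. rewrite Cmod_0, Rmult_0_r, Rmult_0_r. apply sqrt_pos.
    + pose proof S2_ge0. lra.
    + intros b b' r r' Hb Hb' Hr Hr'.
      assert (Kb : forall z (rr : R), (forall c, (exists q, c = (fun p => Cmult (RtoC (w q)) (e q p))) -> Cmod (dpair z c) <= rr) ->
                 forall p, Cmod (z p) * w p <= rr).
      { intros z rr H p. specialize (H _ (ex_intro _ p eq_refl)). rewrite dpair_se, Cmod_mult, Cmod_R in H.
        rewrite Rabs_pos_eq in H. auto. unfold w. apply Rmult_le_pos. apply sqrt_pos. apply Rlt_le, wt_pos. }
      pose proof (Kb b r Hr) as K1. pose proof (Kb b' r' Hr') as K2.
      unfold betaA. replace (4 * S2 * r * r') with (4 * (r * r') * S2) by ring.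
      apply zsum_bound. intros p. unfold intg. rewrite !Cmod_mult, Cmod_conj, Cmod_R.
      specialize (K1 p). specialize (K2 p). unfold w in *.
      pose proof (Hpos p). pose proof (wt_pos p).
      rewrite Rabs_pos_eq by auto.
      assert (Ea : a p = (sqrt (a p) * wt p) * (sqrt (a p) * wt p) / wt p ^ 2).
      { replace ((sqrt (a p) * wt p) * (sqrt (a p) * wt p)) with ((sqrt (a p) * sqrt (a p)) * (wt p * wt p)) by ring.
        rewrite sqrt_sqrt by auto. simpl. field. lra. }
      rewrite Ea. unfold Rdiv.
      replace (Cmod (b p) * Cmod (b' p) * (sqrt (a p) * wt p * (sqrt (a p) * wt p) * / wt p ^ 2))
        with ((Cmod (b p) * (sqrt (a p) * wt p)) * (Cmod (b' p) * (sqrt (a p) * wt p)) * / wt p ^ 2) by ring.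
      apply Rmult_le_compat_r. apply Rlt_le, Rinv_0_lt_compat, wt_pow_pos.
      assert (0 <= sqrt (a p) * wt p) by (apply Rmult_le_pos; [apply sqrt_pos|lra]).
      apply Rmult_le_compat; auto; apply Rmult_le_pos; auto; apply Cmod_ge_0.
  -
    intros b Hb. destruct (dom_of a b b Ha Hb Hb) as [M D]. unfold betaA. rewrite zsum_eq. unfold Re, Im. simpl. split.
    + rewrite (zsumR_ext _ (fun _ => 0)). apply zsumR_zero_fun. intros p. unfold intg. Csimpl. ring.
    + apply (zsumR_nonneg _ _ (dom_re _ _ D)). intros p. unfold intg. Csimpl.
      pose proof (Hpos p). replace ((fst (b p) * fst (b p) - - snd (b p) * snd (b p)) * a p - ((fst (b p) * snd (b p) + - snd (b p) * fst (b p)) * 0))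
        with ((fst (b p) * fst (b p) + snd (b p) * snd (b p)) * a p) by ring.
      apply Rmult_le_pos; auto. nra.
  - split.
    + intros l Hl b c Hb Hc. unfold betaA. apply zsum_ext. intros p. unfold intg, rot.
      pose proof (conj_unit _ (Cmod_Cpowz l (- p) Hl)) as U.
      rewrite Cmult_conj.
      replace (Cmult (Cmult (Cmult (Cconj (Cpowz l (- p))) (Cconj (b p))) (Cmult (Cpowz l (- p)) (c p))) (RtoC (a p)))
        with (Cmult (Cmult (Cconj (Cpowz l (- p))) (Cpowz l (- p))) (Cmult (Cmult (Cconj (b p)) (c p)) (RtoC (a p)))) by ring.
      rewrite U. ring.
    + intros b c Hb Hc. destruct (dom_of a b c Ha Hb Hc) as [M D]. unfold betaA.
      rewrite <- (zsum_rev _ _ D). apply zsum_ext. intros p. unfold intg, rev. rewrite <- Hsym. reflexivity.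
  - intros p. unfold diagmap, betaA. rewrite (zsum_single _ p). unfold intg. rewrite e_same. Csimpl. ring.
    intros q Hq. unfold intg. rewrite e_diff by auto. apply pair_eq; Csimpl; ring.
Qed.


Theorem mainTheorem16 :
  (forall beta : form, coneC beta -> coneT (diagmap beta)) /\
  (forall b1 b2 : form, forall p, diagmap (form_add b1 b2) p = diagmap b1 p + diagmap b2 p) /\
  (forall (t : R) (b : form), 0 <= t -> forall p, diagmap (form_scal t b) p = t * diagmap b p) /\
  (forall b1 b2 : form, coneC b1 -> coneC b2 ->
     (forall p, diagmap b1 p = diagmap b2 p) ->
     forall x y, polygrowth x -> polygrowth y -> b1 x y = b2 x y) /\
  (forall a : Z -> R, coneT a -> exists beta : form, coneC beta /\ forall p, diagmap beta p = a p) /\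
  (forall beta : form, coneC beta -> (coneCplus beta <-> coneTplus (diagmap beta))).
Proof.
  split; [exact part1|]. split.
  { intros. unfold diagmap, form_add. reflexivity. }
  split.
  { intros. unfold diagmap, form_scal. Csimpl. ring. }
  split.
  { intros b1 b2 H1 H2 Hd x y Hx Hy. rewrite (rep b1 x y H1 Hx Hy), (rep b2 x y H2 Hx Hy).
    apply zsum_ext. intros p. unfold integrand. rewrite Hd. reflexivity. }
  split.
  { intros a Ha. exists (betaA a). apply surj; auto. }
  intros beta Hb. split.
  - intros [_ [Hpsd Hpd]]. split. apply part1; auto.
    intros p. destruct (proj1 (proj2 (part1 beta Hb)) p) as [Hlt|Heq]; auto.
    exfalso. assert (E : beta (e p) (e p) = RtoC 0).
    { rewrite (diag_eq beta Hb). rewrite <- Heq. reflexivity. }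
    pose proof (Hpd (e p) (pg_e p) E p) as H. rewrite e_same in H. unfold RtoC in H. injection H. lra.
  - intros [HT Hposs]. split; auto. split. apply Hb.
    intros b Hbp H0. rewrite (rep beta b b Hb Hbp Hbp) in H0.
    pose proof Hbp as [Nx [Ax Hx]].
    destruct (dom_prod b b (diagmap beta) Nx Nx Ax Ax Hx Hx (proj1 HT)) as [M D].
    assert (Hre : forall p, Re (integrand beta b b p) = (Re (b p) ^ 2 + Im (b p) ^ 2) * diagmap beta p).
    { intros p. unfold integrand. Csimpl. ring. }
    assert (Z0 : zsumR (fun p => Re (integrand beta b b p)) = 0).
    { rewrite zsum_eq in H0. unfold RtoC in H0. injection H0. auto. }
    intros p. pose proof (zsumR_zero _ _ (dom_re _ _ D)) as ZZ.
    assert (Hnn : forall p, 0 <= Re (integrand beta b b p)).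
    { intros q. rewrite Hre. apply Rmult_le_pos. pose proof (pow2_ge_0 (Re (b q))). pose proof (pow2_ge_0 (Im (b q))). lra.
      apply Rlt_le, Hposs. }
    specialize (ZZ Hnn Z0 p). pose proof (Hre p) as Hrp. change (Re (integrand beta b b p) = 0) in ZZ. rewrite Hrp in ZZ. pose proof (Hposs p).
    assert (Re (b p) ^ 2 + Im (b p) ^ 2 = 0).
    { apply Rmult_eq_reg_r with (diagmap beta p). rewrite ZZ. ring. lra. }
    pose proof (pow2_ge_0 (Re (b p))). pose proof (pow2_ge_0 (Im (b p))).
    assert (Re (b p) = 0) by nra. assert (Im (b p) = 0) by nra.
    apply pair_eq; auto.
Qed.
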